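(* Let $r\ge2$ be an integer and let $\theta\in C_p(\mathbb{R})$ satisfy $\theta(x)=x^2$ for $x\in[0,\frac1r]$, $\theta\in C^2(\mathbb{R})$, and $\theta>0$ on $(0,1)$. Then $\Delta_{n,0}(\tfrac1r;U_\theta)=-\frac{2}{r-1}$ for every $n\in\mathbb{N}_0$. Consequently $U_\theta\notin\mathcal{P}$.
   Context: $C_p(\mathbb{R})$ denotes the set of all continuous functions $f:\mathbb{R}\to\mathbb{R}$ periodic with period $1$ with $f(0)=0$; $\mathbb{N}_0=\mathbb{N}\cup\{0\}$. For $\psi\in C_p(\mathbb{R})$, $U_\psi(x)=\sum_{j=0}^\infty r^{-j}\psi(r^jx)$. For $f\in C_p(\mathbb{R})$ and $(n,k,y)\in\mathbb{N}_0\times\mathbb{Z}\times(0,1)$: $\delta^+_{n,k}(y;f)=\dfrac{f(\frac{k+1}{r^n})-f(\frac{k+y}{r^n})}{\frac{1-y}{r^n}}$, $\delta^-_{n,k}(y;f)=\dfrac{f(\frac{k+y}{r^n})-f(\frac{k}{r^n})}{\frac{y}{r^n}}$, $\Delta_{n,k}(y;f)=2r^n(\delta^+_{n,k}(y;f)-\delta^-_{n,k}(y;f))$. For $c>0$, $\mathcal{P}_c$ is the set of $f\in C_p(\mathbb{R})$ with $\delta^+_{n,k}(y;f)-\delta^-_{n,k}(y;f)\le-c$ for all $(n,k,y)\in\mathbb{N}_0\times\mathbb{Z}\times(0,1)$, and $\mathcal{P}=\bigcup_{c>0}\mathcal{P}_c$. *)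

(* Defs.v *)
From Stdlib Require Import Reals.
From Coquelicot Require Import Coquelicot.
Open Scope R_scope.

Definition Cp (f : R -> R) : Prop :=
  (forall x, continuous f x) /\ (forall x, f (x + 1) = f x) /\ f 0 = 0.

Definition C2 (f : R -> R) : Prop :=
  (forall x, ex_derive f x) /\
  (forall x, ex_derive (Derive f) x) /\
  (forall x, continuous (Derive_n f 2) x).

Definition U (r : R) (psi : R -> R) (x : R) : R :=
  Series (fun j : nat => / r ^ j * psi (r ^ j * x)).

Definition delta_plus (r : R) (n : nat) (k : Z) (y : R) (f : R -> R) : R :=
  (f ((IZR k + 1) / r ^ n) - f ((IZR k + y) / r ^ n)) / ((1 - y) / r ^ n).

Definition delta_minus (r : R) (n : nat) (k : Z) (y : R) (f : R -> R) : R :=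
  (f ((IZR k + y) / r ^ n) - f (IZR k / r ^ n)) / (y / r ^ n).

Definition Delta_nk (r : R) (n : nat) (k : Z) (y : R) (f : R -> R) : R :=
  2 * r ^ n * (delta_plus r n k y f - delta_minus r n k y f).

Definition P_c (r c : R) (f : R -> R) : Prop :=
  Cp f /\
  forall (n : nat) (k : Z) (y : R), 0 < y < 1 ->
    delta_plus r n k y f - delta_minus r n k y f <= - c.

Definition P_class (r : R) (f : R -> R) : Prop :=
  exists c : R, 0 < c /\ P_c r c f.

(* Main.v *)
Require Import Defs.
From Stdlib Require Import Reals Lra Lia.
From Coquelicot Require Import Coquelicot.
Open Scope R_scope.

Lemma series_finite (a : nat -> R) N : (forall k, (N < k)%nat -> a k = 0) -> Series a = sum_n a N.
Proof.
  intros H. apply is_series_unique.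
  assert (L : is_lim_seq (sum_n a) (sum_n a N)).
  { apply (is_lim_seq_ext_loc (fun _ => sum_n a N)).
    - exists N. intros k Hk. induction Hk. reflexivity.
      rewrite sum_Sn, H by lia. change (plus ?u ?v) with (Rplus u v). rewrite Rplus_0_r. exact IHHk.
    - apply is_lim_seq_const. }
  exact L.
Qed.

Lemma geo (x c : R) N : sum_n (fun j => x ^ j * c) N * (x - 1) = (x ^ (S N) - 1) * c.
Proof.
  induction N. rewrite sum_O. simpl; ring.
  rewrite sum_Sn. change (plus ?u ?v) with (Rplus u v). simpl in IHN |- *. rewrite Rmult_plus_distr_r, IHN. ring.
Qed.

Section S.
Variable r : nat.
Variable theta : R -> R.
Hypothesis hr : (2 <= r)%nat.
Hypothesis hCp : Cp theta.
Hypothesis hsq : forall x : R, 0 <= x <= / INR r -> theta x = x ^ 2.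

Local Notation q := (INR r).

Lemma q2 : 2 <= q.
Proof. apply (le_INR 2) in hr. simpl in hr. lra. Qed.

Lemma theta_nat m : theta (INR m) = 0.
Proof.
  destruct hCp as [_ [Hp H0]].
  induction m. simpl. exact H0.
  rewrite S_INR, Hp. exact IHm.
Qed.

Lemma qpow_pos n : 0 < q ^ n.
Proof. apply pow_lt. pose proof q2. lra. Qed.

Definition V n := (q ^ n - 1) / (q ^ n * q ^ n) / (q - 1).

Lemma term_big n j : (n <= j)%nat -> theta (q ^ j * / q ^ n) = 0.
Proof.
  intros H. replace j with ((j - n) + n)%nat by lia. rewrite pow_add.
  pose proof (qpow_pos n).
  replace (q ^ (j - n) * q ^ n * / q ^ n) with (q ^ (j - n)) by (field; lra).
  rewrite <- pow_INR. apply theta_nat.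
Qed.

Lemma term_small n j : (j < n)%nat -> / q ^ j * theta (q ^ j * / q ^ n) = q ^ j * / (q ^ n * q ^ n).
Proof.
  intros H. pose proof (qpow_pos n). pose proof (qpow_pos j). pose proof q2.
  rewrite hsq.
  - field. lra.
  - split.
    + apply Rmult_le_pos; [lra|]. apply Rlt_le, Rinv_0_lt_compat; lra.
    + assert (q ^ (S j) <= q ^ n) by (apply Rle_pow; [lra|lia]).
      simpl in H3. apply (Rmult_le_reg_r (q ^ n * q)). nra.
      replace (q ^ j * / q ^ n * (q ^ n * q)) with (q * q ^ j) by (field; lra).
      replace (/ q * (q ^ n * q ^ n * / q ^ n * q) ) with (q ^ n) by (field; lra).
      replace (/ INR r * (q ^ n * q)) with (q ^ n) by (field; lra). lra.
Qed.

Lemma U_pt n : U q theta (/ q ^ n) = V n.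
Proof.
  unfold U. rewrite (series_finite _ n).
  2:{ intros k Hk. rewrite term_big by lia. ring. }
  pose proof (qpow_pos n). pose proof q2.
  destruct n as [|m].
  - rewrite sum_O, term_big by lia. unfold V. simpl. field. lra.
  - rewrite sum_Sn. change (plus ?u ?v) with (Rplus u v).
    rewrite term_big by lia. rewrite Rmult_0_r, Rplus_0_r.
    rewrite (sum_n_ext_loc _ (fun j => q ^ j * / (q ^ S m * q ^ S m))).
    2:{ intros j Hj. apply term_small. lia. }
    unfold V. apply (Rmult_eq_reg_r (q - 1)); [|lra].
    rewrite geo. field. split; lra.
Qed.

Lemma U_0 : U q theta 0 = 0.
Proof.
  unfold U. rewrite (series_finite _ 0).
  - rewrite sum_O. rewrite Rmult_0_r. simpl. destruct hCp as [_ [_ H0]]. rewrite H0. ring.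
  - intros k _. rewrite Rmult_0_r. destruct hCp as [_ [_ H0]]. rewrite H0. ring.
Qed.

Lemma diff_val n :
  delta_plus q n 0%Z (/ q) (U q theta) - delta_minus q n 0%Z (/ q) (U q theta)
  = - (/ (q ^ n * (q - 1))).
Proof.
  pose proof (qpow_pos n). pose proof q2.
  unfold delta_plus, delta_minus.
  replace ((IZR 0 + 1) / q ^ n) with (/ q ^ n) by (simpl; field; lra).
  replace ((IZR 0 + / q) / q ^ n) with (/ q ^ (S n)) by (simpl; field; lra).
  replace (IZR 0 / q ^ n) with 0 by (simpl; field; lra).
  rewrite !U_pt, U_0. unfold V. simpl. field. split; lra.
Qed.

End S.

Theorem theorem3p9 (r : nat) (theta : R -> R)
  (hr : (2 <= r)%nat)
  (hCp : Cp theta)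
  (hsq : forall x : R, 0 <= x <= / INR r -> theta x = x ^ 2)
  (hC2 : C2 theta)
  (hpos : forall x : R, 0 < x < 1 -> 0 < theta x) :
  (forall n : nat,
     Delta_nk (INR r) n 0%Z (/ INR r) (U (INR r) theta) = - (2 / (INR r - 1)))
  /\ ~ P_class (INR r) (U (INR r) theta).
Proof.
  pose proof (q2 r hr) as Hq. pose proof (qpow_pos r hr) as Hp.
  
  split.
  - intros n. unfold Delta_nk. rewrite (diff_val r theta hr hCp hsq). specialize (Hp n).
    field. split; lra.
  - intros [c [Hc [_ HP]]].
    destruct (archimed_cor1 c Hc) as [N [HN HN0]].
    specialize (HP N 0%Z (/ INR r)).
    rewrite (diff_val r theta hr hCp hsq) in HP.
    assert (Hy : 0 < / INR r < 1).
    { split. apply Rinv_0_lt_compat; lra. apply (Rmult_lt_reg_r (INR r)); [lra|].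
      rewrite Rinv_l by lra. lra. }
    specialize (HP Hy).
    assert (HB : forall n, INR n <= INR r ^ n).
    { induction n. simpl; lra. rewrite S_INR. simpl.
      assert (1 <= INR r ^ n) by (apply pow_R1_Rle; lra). nra. }
    specialize (HB N). specialize (Hp N).
    assert (HN1 : 0 < INR N) by (apply lt_0_INR; lia).
    assert (/ (INR r ^ N * (INR r - 1)) <= / INR N).
    { apply Rinv_le_contravar. exact HN1. nra. }
    lra.
Qed.
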